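(* Consider the second-order Kuramoto model with bonding force $$\dot\theta_i=\omega_i,\qquad \dot\omega_i=\frac{1}{N}\sum_{j=1}^N\big[\kappa_0\cos(\theta_j-\theta_i)+\kappa_1\big](\omega_j-\omega_i)+\frac{\kappa_2}{N}\sum_{j=1}^N\big[|\theta_j-\theta_i|-\theta^\infty_{ij}\big]\operatorname{sgn}(\theta_j-\theta_i),\quad i\in[N].$$ Suppose the initial data and parameters satisfy $$(\Theta^0,W^0)\in\mathcal{S},\quad \mathcal{E}(0)<\frac{\kappa_2\big(\min_{i\ne j}\theta^\infty_{ij}\big)^2}{2N},\quad \kappa_0\cos\mathcal{U}+\kappa_1>0,\quad \kappa_2>0,$$ and for $\tau\in(0,\infty]$ let $\{(\theta_i,\omega_i)\}$ be a smooth solution on $[0,\tau)$. Then no collision occurs between any pair of distinct oscillators on $[0,\tau]$: $\theta_i(t)\ne\theta_j(t)$ for all $i\ne j$ and $t\in[0,\tau)$, and no pair collides in the limit $t\to\tau^-$ (i.e. it is not the case that $\theta_i(t)-\theta_j(t)\to0$ as $t\to\tau^-$ for some $i\neq j$).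
   Context: $N\ge2$, $[N]=\{1,\dots,N\}$, $\kappa_0,\kappa_1\ge0$, $\kappa_2>0$; $[\theta^\infty_{ij}]$ real $N\times N$ matrix with $\theta^\infty_{ii}=0$, $\theta^\infty_{ij}=\theta^\infty_{ji}$; $\operatorname{sgn}$ is the sign function; $(\Theta^0,W^0)=(\theta_i(0),\omega_i(0))_{i}$. Energy: $\mathcal{E}:=\frac12\sum_i|\omega_i|^2+\frac{\kappa_2}{4N}\sum_{i,j}(|\theta_j-\theta_i|-\theta^\infty_{ij})^2$. $\mathcal{U}:=\max_{i\ne j}\theta^\infty_{ij}+\sqrt{2N\mathcal{E}(0)/\kappa_2}$, and $\mathcal{S}:=\{(\Theta,W)\in\mathbb{R}^{2N}:|\theta_i-\theta_j|<\mathcal{U}<\pi\ \forall i,j\}$. *)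

(* Defs.v *)
From HB Require Import structures.
From mathcomp Require Import all_boot all_order all_algebra.
From mathcomp Require Import all_classical all_reals all_analysis.
Set Implicit Arguments. Unset Strict Implicit. Unset Printing Implicit Defensive.
Import Order.TTheory GRing.Theory Num.Theory.
Import numFieldNormedType.Exports.
Local Open Scope ring_scope.
Local Open Scope classical_set_scope.

Section Kuramoto.
Variables (R : realType) (N : nat).

(* sum of absolute values of all entries: a bound used only as a seed
   for the max / min over the (nonempty when N >= 2) off-diagonal set *)
Definition absbound (th : 'I_N -> 'I_N -> R) : R :=
  \sum_(i < N) \sum_(j < N) `|th i j|.

Definition max_offdiag (th : 'I_N -> 'I_N -> R) : R :=
  \big[Num.max/ - absbound th]_(ij : 'I_N * 'I_N | ij.1 != ij.2) th ij.1 ij.2.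

Definition min_offdiag (th : 'I_N -> 'I_N -> R) : R :=
  \big[Num.min/ absbound th]_(ij : 'I_N * 'I_N | ij.1 != ij.2) th ij.1 ij.2.

Definition energy (k2 : R) (thinf : 'I_N -> 'I_N -> R)
    (Th W : 'I_N -> R) : R :=
  2^-1 * \sum_(i < N) (W i) ^+ 2
  + k2 / (4 * N%:R) *
    \sum_(i < N) \sum_(j < N) (`|Th j - Th i| - thinf i j) ^+ 2.

Definition Ubound (k2 : R) (thinf : 'I_N -> 'I_N -> R) (E0 : R) : R :=
  max_offdiag thinf + Num.sqrt (2 * N%:R * E0 / k2).

Definition inS (U : R) (Th W : 'I_N -> R) : Prop :=
  (forall i j, `|Th i - Th j| < U) /\ U < pi.

Definition kuramoto_rhs (k0 k1 k2 : R) (thinf : 'I_N -> 'I_N -> R)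
    (Th W : 'I_N -> R) (i : 'I_N) : R :=
  N%:R^-1 * \sum_(j < N) (k0 * cos (Th j - Th i) + k1) * (W j - W i)
  + k2 / N%:R * \sum_(j < N)
      (`|Th j - Th i| - thinf i j) * Num.sg (Th j - Th i).

End Kuramoto.

Definition to_left_of {R : realType} (tau : \bar R) : set_system R :=
  match tau with
  | EFin r => at_left r
  | +oo%E => pinfty_nbhs R
  | -oo%E => ninfty_nbhs R
  end.

(* Main.v *)
Require Import Defs.
From HB Require Import structures.
From mathcomp Require Import all_boot all_order all_algebra.
From mathcomp Require Import all_classical all_reals all_analysis.
From mathcomp Require Import ring lra.
Import Order.TTheory GRing.Theory Num.Theory.
Import numFieldNormedType.Exports.
Local Open Scope ring_scope.
Local Open Scope classical_set_scope.

Section Helpers.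
Variable R : realType.
Implicit Types (f g : R -> R) (x df dg c : R).

Lemma two_le_sum (I : finType) (F : I -> R) i j : i != j ->
  (forall k, 0 <= F k) -> F i + F j <= \sum_k F k.
Proof.
move=> ij F0; rewrite (bigD1 i) //= (bigD1 j) 1?eq_sym //= addrA lerDl.
by apply: sumr_ge0 => k _.
Qed.

Lemma one_le_sum (I : finType) (F : I -> R) i :
  (forall k, 0 <= F k) -> F i <= \sum_k F k.
Proof.
move=> F0; rewrite (bigD1 i) //= lerDl.
by apply: sumr_ge0 => k _.
Qed.

Lemma D_add {f g x df dg} : is_derive x 1 f df -> is_derive x 1 g dg ->
  is_derive x 1 (fun t => f t + g t) (df + dg).
Proof. move=> Hf Hg; exact: is_deriveD. Qed.

Lemma D_sub {f g x df dg} : is_derive x 1 f df -> is_derive x 1 g dg ->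
  is_derive x 1 (fun t => f t - g t) (df - dg).
Proof. move=> Hf Hg; exact: is_deriveB. Qed.

Lemma D_mul {f g x df dg} : is_derive x 1 f df -> is_derive x 1 g dg ->
  is_derive x 1 (fun t => f t * g t) (f x * dg + g x * df).
Proof. move=> Hf Hg; exact: is_deriveM. Qed.

Lemma D_cst c x : is_derive x 1 (fun _ => c) 0.
Proof. exact: is_derive_cst. Qed.

Lemma D_scale c {f x df} : is_derive x 1 f df ->
  is_derive x 1 (fun t => c * f t) (c * df).
Proof.
move=> Hf; have := D_mul (D_cst c x) Hf.
by rewrite mulr0 addr0.
Qed.

Lemma D_sq {f x df} : is_derive x 1 f df ->
  is_derive x 1 (fun t => f t ^+ 2) (2 * f x * df).
Proof.
move=> Hf; have := D_mul Hf Hf.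
have -> : (fun t => f t * f t) = (fun t => f t ^+ 2) by apply/funext => t; rewrite expr2.
move=> H; apply: is_derive_eq H _.
by ring.
Qed.

Lemma D_sum n (h : 'I_n -> R -> R) x (dh : 'I_n -> R) :
  (forall i, is_derive x 1 (h i) (dh i)) ->
  is_derive x 1 (fun t => \sum_(i < n) h i t) (\sum_(i < n) dh i).
Proof.
move=> Hh; have := is_derive_sum Hh.
by rewrite fct_sumE.
Qed.

Lemma cvg_sumf {T} (F : set_system T) {FF : Filter F} n (h : 'I_n -> T -> R) (l : 'I_n -> R) :
  (forall i, h i t @[t --> F] --> l i) ->
  (\sum_(i < n) h i t) @[t --> F] --> \sum_(i < n) l i.
Proof.
elim: n h l => [|n IH] h l Hh.
  under eq_fun do rewrite big_ord0. rewrite big_ord0; exact: cvg_cst.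
under eq_fun do rewrite big_ord_recr /=. rewrite big_ord_recr /=.
apply: cvgD; last exact: Hh.
exact: (IH (fun i => h (widen_ord (leqnSn n) i))).
Qed.


Lemma C_add {T} {F : set_system T} {FF : Filter F} (f g : T -> R) (a b : R) :
  f t @[t --> F] --> a -> g t @[t --> F] --> b -> (f t + g t) @[t --> F] --> a + b.
Proof. by move=> Hf Hg; apply: cvgD. Qed.

Lemma C_sub {T} {F : set_system T} {FF : Filter F} (f g : T -> R) (a b : R) :
  f t @[t --> F] --> a -> g t @[t --> F] --> b -> (f t - g t) @[t --> F] --> a - b.
Proof. by move=> Hf Hg; apply: cvgB. Qed.

Lemma C_mul {T} {F : set_system T} {FF : Filter F} (f g : T -> R) (a b : R) :
  f t @[t --> F] --> a -> g t @[t --> F] --> b -> (f t * g t) @[t --> F] --> a * b.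
Proof. by move=> Hf Hg; apply: cvgM. Qed.

Lemma C_cst {T} {F : set_system T} {FF : Filter F} (c : R) :
  (fun _ : T => c) @ F --> c.
Proof. exact: cvg_cst. Qed.

Lemma C_sq {T} {F : set_system T} {FF : Filter F} (f : T -> R) (a : R) :
  f t @[t --> F] --> a -> (f t ^+ 2) @[t --> F] --> a ^+ 2.
Proof.
move=> Hf; have H := @C_mul _ _ _ _ _ _ _ Hf Hf.
have -> : (fun t => f t ^+ 2) = (fun t => f t * f t) by apply/funext => t; rewrite expr2.
by rewrite expr2; apply: H.
Qed.

Lemma C_comp {T} {F : set_system T} {FF : Filter F} (f : T -> R) (g : R -> R) (a : R) :
  f t @[t --> F] --> a -> {for a, continuous g} -> (g (f t)) @[t --> F] --> g a.
Proof. by move=> Hf Hg; apply: cvg_comp Hf Hg. Qed.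

Lemma sg_close (d x : R) : `|d - x| < `|d| -> Num.sg x = Num.sg d.
Proof.
case: (ltgtP d 0) => d0.
- rewrite (ltr0_norm d0) => H.
  have x0 : x < 0 by move: H; rewrite ltr_norml => /andP[]; lra.
  by rewrite !ltr0_sg.
- rewrite (gtr0_norm d0) => H.
  have x0 : 0 < x by move: H; rewrite ltr_norml => /andP[]; lra.
  by rewrite !gtr0_sg.
- by rewrite d0 normr0 ltNge normr_ge0.
Qed.

Lemma near_right_ex (s : R) (P : R -> Prop) :
  (\forall u \near s^'+, P u) -> exists2 e, 0 < e & forall u, s < u -> u < s + e -> P u.
Proof.
move=> /nbhs_ballP [e /= e0 He]; exists e => // u su ue; apply: He => //.
by rewrite /ball /= distrC ger0_norm ?subr_ge0 ?ltW // ltrBlDl.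
Qed.

End Helpers.
Arguments near_right_ex {R s P}.
Arguments D_add {R f g x df dg}.
Arguments D_sub {R f g x df dg}.
Arguments D_mul {R f g x df dg}.
Arguments D_scale {R} c {f x df}.
Arguments D_sq {R f x df}.
Arguments D_cst {R} c x.


Section Main.
Variables (R : realType) (N : nat) (k0 k1 k2 : R)
    (thinf : 'I_N -> 'I_N -> R) (tau : \bar R)
    (theta omega : 'I_N -> R -> R).
Hypotheses (HN : (1 < N)%N) (Hk0 : 0 <= k0) (Hk1 : 0 <= k1) (Hk2 : 0 < k2)
  (Hdiag : forall i, thinf i i = 0) (Hsym : forall i j, thinf i j = thinf j i).

Definition Et t := energy k2 thinf (fun j => theta j t) (fun j => omega j t).

Lemma N_gt0 : 0 < N%:R :> R.
Proof. by rewrite ltr0n; apply: leq_trans HN. Qed.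

Lemma Et_ge0 t : 0 <= Et t.
Proof.
have N0 := N_gt0.
rewrite /Et /energy addr_ge0 // mulr_ge0 //.
- by apply: sumr_ge0 => i _; rewrite sqr_ge0.
- by rewrite divr_ge0 ?mulr_ge0 // ltW.
- by apply: sumr_ge0 => i _; apply: sumr_ge0 => j _; rewrite sqr_ge0.
Qed.

Lemma pair_bound t i j : i != j ->
  k2 / (2 * N%:R) * (`|theta j t - theta i t| - thinf i j) ^+ 2 <= Et t.
Proof.
move=> ij; have N0 := N_gt0.
set g := fun i j => (`|theta j t - theta i t| - thinf i j) ^+ 2.
have g0 : forall i j, 0 <= g i j by move=> *; rewrite sqr_ge0.
have gs : g j i = g i j by rewrite /g distrC Hsym.
have H1 : g i j + g j i <= \sum_(i0 < N) \sum_(j0 < N) g i0 j0.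
  apply: (le_trans (lerD (@one_le_sum R _ (g i) j (g0 i))
                         (@one_le_sum R _ (g j) i (g0 j)))).
  by apply: two_le_sum => // k; apply: sumr_ge0 => *.
rewrite /Et /energy -/(g).
rewrite -[X in X <= _]add0r; apply: lerD.
  by rewrite mulr_ge0 //; apply: sumr_ge0 => k _; rewrite sqr_ge0.
apply: (le_trans _ (ler_wpM2l _ H1)); last by rewrite divr_ge0 ?mulr_ge0 // ltW.
rewrite gs le_eqVlt; apply/orP; left; apply/eqP.
rewrite /g; set y := (`|theta j t - theta i t| - thinf i j) ^+ 2.
by field; rewrite lt0r_neq0.
Qed.

Definition E0 := Et 0.
Definition dlt := Num.sqrt (2 * N%:R * E0 / k2).
Definition mm := min_offdiag thinf.
Definition MM := max_offdiag thinf.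

Lemma m_le i j : i != j -> mm <= thinf i j.
Proof. by move=> ij; exact: (@bigmin_le_cond _ _ _ _ (i, j) (fun ij : 'I_N * 'I_N => ij.1 != ij.2) (fun ij => thinf ij.1 ij.2)). Qed.

Lemma M_ge i j : i != j -> thinf i j <= MM.
Proof. by move=> ij; exact: (@le_bigmax_cond _ _ _ _ (i, j) (fun ij : 'I_N * 'I_N => ij.1 != ij.2) (fun ij => thinf ij.1 ij.2)). Qed.

Lemma m_attained : exists i j, i != j /\ thinf i j = mm.
Proof.
have h0 : (0 < N)%N by apply: leq_trans HN.
pose i0 := Ordinal h0; pose i1 := Ordinal HN.
have P0 : (i0, i1).1 != (i0, i1).2 by [].
have := @bigmin_eq_arg _ _ _ (absbound thinf) (i0, i1) (fun ij : 'I_N * 'I_N => ij.1 != ij.2) (fun ij => thinf ij.1 ij.2) P0.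
move=> /(_ _) H.
rewrite /mm /min_offdiag.
have /H -> : forall ij : 'I_N * 'I_N, ij.1 != ij.2 -> thinf ij.1 ij.2 <= absbound thinf.
  move=> [i j] /= _; rewrite /absbound.
  apply: (le_trans (ler_norm _)).
  apply: (le_trans _ (@one_le_sum R _ (fun i => \sum_(j < N) `|thinf i j|) i _)).
    by apply: (@one_le_sum R _ (fun j => `|thinf i j|) j) => k.
  by move=> k; apply: sumr_ge0.
case: arg_minP => //= [[i j]] /= ij _.
by exists i, j.
Qed.

Lemma dist_bound t i j : Et t <= E0 -> i != j ->
  `| `|theta j t - theta i t| - thinf i j| <= dlt.
Proof.
move=> Ht ij; have N0 := N_gt0.
have := le_trans (pair_bound t i j ij) Ht.
set x := (`|theta j t - theta i t| - thinf i j) => Hx.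
have E00 : 0 <= E0 by apply: Et_ge0.
rewrite /dlt -sqrtr_sqr ler_sqrt; last first.
  apply: divr_ge0; last exact: ltW.
  by apply: mulr_ge0 => //; apply: mulr_ge0 => //; exact: ltW.
move: Hx; set K := k2 / (2 * N%:R).
have K0 : 0 < K by apply: divr_gt0 => //; apply: mulr_gt0.
have -> : 2 * N%:R * E0 / k2 = E0 / K by rewrite /K; field; rewrite !lt0r_neq0.
by rewrite ler_pdivlMr // mulrC.
Qed.

Hypothesis HE0 : E0 < k2 * mm ^+ 2 / (2 * N%:R).

Lemma m_gt_delta : dlt < mm.
Proof.
have N0 := N_gt0.
have [i [j [ij Hm]]] := m_attained.
have Hpb := pair_bound 0 i j ij; rewrite Hm in Hpb.
have mpos : 0 < mm.
  rewrite ltNge; apply/negP => m0.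
  have : k2 / (2 * N%:R) * mm ^+ 2 <= E0.
    apply: le_trans Hpb; apply: ler_wpM2l.
      by apply: divr_ge0; [exact: ltW| apply: mulr_ge0].
    have a0 : 0 <= `|theta j 0 - theta i 0| by [].
    move: a0; set a := `|_|; move=> a0; nra.
  move=> H; move: HE0; rewrite ltNge; move/negP; apply.
  by apply: le_trans H; rewrite le_eqVlt; apply/orP; left; apply/eqP; field; rewrite lt0r_neq0.
rewrite /dlt -[mm]gtr0_norm // -sqrtr_sqr ltr_sqrt ?exprn_gt0 //.
set K := k2 / (2 * N%:R).
have K0 : 0 < K by apply: divr_gt0 => //; apply: mulr_gt0.
have -> : 2 * N%:R * E0 / k2 = E0 / K by rewrite /K; field; rewrite !lt0r_neq0.
rewrite ltr_pdivrMr // mulrC.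
by move: HE0; have -> : k2 * mm ^+ 2 / (2 * N%:R) = K * mm ^+ 2 by rewrite /K; field; rewrite lt0r_neq0.
Qed.

Lemma sep_bound t i j : Et t <= E0 -> i != j ->
  mm - dlt <= `|theta j t - theta i t| /\ `|theta j t - theta i t| <= MM + dlt.
Proof.
move=> Ht ij; have := dist_bound t i j Ht ij; rewrite ler_norml => /andP[h1 h2].
have := m_le i j ij; have := M_ge i j ij; lra.
Qed.

Definition Eg (g : 'I_N -> 'I_N -> R -> R) t :=
  2^-1 * (\sum_(i < N) omega i t ^+ 2) + k2 / (4 * N%:R) *
   (\sum_(i < N) \sum_(j < N) (g i j (theta j t - theta i t) - thinf i j) ^+ 2).

Definition Es (sig : 'I_N -> 'I_N -> R) t := Eg (fun i j x => sig i j * x) t.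

Lemma Et_Eg t : Et t = Eg (fun _ _ x => `|x|) t.
Proof. by []. Qed.

Lemma Eg_cvg g {T} (F : set_system T) {FF : Filter F} (th om : 'I_N -> T -> R) x0 :
  (forall i j, continuous (g i j)) ->
  (forall i, th i t @[t --> F] --> theta i x0) ->
  (forall i, om i t @[t --> F] --> omega i x0) ->
  (2^-1 * (\sum_(i < N) om i t ^+ 2) + k2 / (4 * N%:R) *
   (\sum_(i < N) \sum_(j < N) (g i j (th j t - th i t) - thinf i j) ^+ 2))
   @[t --> F] --> Eg g x0.
Proof.
move=> Hg Hth Hom; rewrite /Eg.
apply: C_add; apply: C_mul; try exact: C_cst.
  by apply: cvg_sumf => i; apply: C_sq.
apply: cvg_sumf => i; apply: cvg_sumf => j; apply: C_sq; apply: C_sub; last exact: C_cst.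
by apply: C_comp; [apply: C_sub|apply: Hg].
Qed.

Hypothesis Hder : forall i t, 0 < t -> (t%:E < tau)%E ->
     is_derive t 1 (theta i) (omega i t) /\
     is_derive t 1 (omega i)
       (kuramoto_rhs k0 k1 k2 thinf (fun j => theta j t) (fun j => omega j t) i).

Lemma Es_deriv sig u : 0 < u -> (u%:E < tau)%E ->
  (forall i j, Num.sg (theta j u - theta i u) = sig i j) ->
  (forall i j, 0 <= k0 * cos (theta j u - theta i u) + k1) ->
  derivable (Es sig) u 1 /\ (Es sig)^`() u <= 0.
Proof.
move=> u0 ut Hs Ha; have N0 := N_gt0.
pose rhs i := kuramoto_rhs k0 k1 k2 thinf (fun j => theta j u) (fun j => omega j u) i.
have Dth i : is_derive u 1 (theta i) (omega i u) := (Hder i u u0 ut).1.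
have Dom i : is_derive u 1 (omega i) (rhs i) := (Hder i u u0 ut).2.
have D1 := @D_sum R N (fun i t => omega i t ^+ 2) u _ (fun i => D_sq (Dom i)).
have D2 := @D_sum R N (fun i t => \sum_(j < N) (sig i j * (theta j t - theta i t) - thinf i j) ^+ 2) u _
   (fun i => @D_sum R N (fun j t => (sig i j * (theta j t - theta i t) - thinf i j) ^+ 2) u _
   (fun j => D_sq (D_sub (D_scale (sig i j) (D_sub (Dth j) (Dth i))) (D_cst (thinf i j) u)))).
have DE := D_add (D_scale 2^-1 D1) (D_scale (k2 / (4 * N%:R)) D2).
have {}DE : is_derive u 1 (Es sig) _ := DE.
split; first exact: (@ex_derive _ _ _ _ _ _ _ DE).
rewrite derive1E (@derive_val _ _ _ _ _ _ _ DE) /=.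
pose a i j := k0 * cos (theta j u - theta i u) + k1.
pose b i j := (sig i j * (theta j u - theta i u) - thinf i j) * sig i j.
have sN i j : sig j i = - sig i j by rewrite -!Hs -opprB sgrN.
have bN i j : b j i = - b i j.
  by rewrite /b sN Hsym -opprB; ring.
have rhsE i : rhs i = N%:R^-1 * (\sum_(j < N) a i j * (omega j u - omega i u))
                     + k2 / N%:R * \sum_(j < N) b i j.
  rewrite /rhs /kuramoto_rhs; congr (_ + _ * _); apply: eq_bigr => j _.
  by rewrite /b Hs normrEsg Hs.
pose K := \sum_(i < N) \sum_(j < N) a i j * (omega j u - omega i u) * omega i u.
pose P := \sum_(i < N) \sum_(j < N) b i j * omega i u.
have E1 : \sum_(i < N) 2 * omega i u * rhs i = 2 * N%:R^-1 * K + 2 * (k2 / N%:R) * P.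
  rewrite /K /P !mulr_sumr -big_split /=; apply: eq_bigr => i _.
  rewrite rhsE mulrDr !mulr_sumr; congr (_ + _); apply: eq_bigr => j _; ring.
have E2 : \sum_(i < N) \sum_(j < N) 2 * (sig i j * (theta j u - theta i u) - thinf i j) *
             (sig i j * (omega j u - omega i u) - 0) = - 4 * P.
  transitivity (2 * (\sum_(i < N) \sum_(j < N) b i j * omega j u) - 2 * P).
    rewrite /P !mulr_sumr -sumrB; apply: eq_bigr => i _.
    rewrite !mulr_sumr -sumrB; apply: eq_bigr => j _; rewrite /b; ring.
  rewrite exchange_big /=.
  have -> : \sum_(j < N) \sum_(i < N) b i j * omega j u = - P.
    rewrite /P -sumrN; apply: eq_bigr => j _; rewrite -sumrN; apply: eq_bigr => i _.
    by rewrite bN mulNr.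
  ring.
have KK : K <= 0.
  have K2 : K + K = \sum_(i < N) \sum_(j < N) (- (a i j * (omega j u - omega i u) ^+ 2)).
    rewrite {2}/K exchange_big /= /K -big_split /=; apply: eq_bigr => i _.
    rewrite -big_split /=; apply: eq_bigr => j _.
    have -> : a j i = a i j by rewrite /a -opprB cosN.
    ring.
  have : K + K <= 0.
    rewrite K2; apply: sumr_le0 => i _; apply: sumr_le0 => j _.
    by rewrite oppr_le0 mulr_ge0 ?sqr_ge0 //; apply: Ha.
  lra.
rewrite E1 E2.
have -> : 2^-1 * (2 * N%:R^-1 * K + 2 * (k2 / N%:R) * P) + k2 / (4 * N%:R) * (- 4 * P)
   = N%:R^-1 * K by field; rewrite lt0r_neq0.
by rewrite mulr_ge0_le0 // invr_ge0 ltW.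
Qed.

Lemma cont_th i x : 0 < x -> (x%:E < tau)%E -> theta i t @[t --> x] --> theta i x.
Proof.
move=> x0 xt; have [H _] := Hder i x x0 xt.
by apply: differentiable_continuous; apply/derivable1_diffP; exact: (@ex_derive _ _ _ _ _ _ _ H).
Qed.

Lemma cont_om i x : 0 < x -> (x%:E < tau)%E -> omega i t @[t --> x] --> omega i x.
Proof.
move=> x0 xt; have [_ H] := Hder i x x0 xt.
by apply: differentiable_continuous; apply/derivable1_diffP; exact: (@ex_derive _ _ _ _ _ _ _ H).
Qed.

Hypotheses (Hc0th : forall i, theta i x @[x --> 0^'+] --> theta i 0)
  (Hc0om : forall i, omega i x @[x --> 0^'+] --> omega i 0)
  (HU : MM + dlt < pi) (Hcos : 0 < k0 * cos (MM + dlt) + k1).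

Lemma U_ge0 : 0 <= MM + dlt.
Proof.
have [i [j [ij Hm]]] := m_attained.
have := M_ge i j ij; have := m_gt_delta; have : 0 <= dlt by apply: sqrtr_ge0.
rewrite Hm => h1 h2 h3.
by apply: addr_ge0 => //; apply: le_trans h3; apply: le_trans (ltW h2).
Qed.

Lemma cos_pos d : `|d| <= MM + dlt -> 0 < k0 * cos d + k1.
Proof.
move=> Hd.
have Hc : cos (MM + dlt) <= cos d.
  have -> : cos d = cos `|d|.
    by case: (ler0P d) => d0; rewrite ?ler0_norm ?gtr0_norm ?cosN.
  move: Hd; rewrite le_eqVlt => /orP[/eqP -> //|Hd].
  apply: ltW; rewrite ltr_cos //; rewrite in_itv /= ?normr_ge0 ?U_ge0 /=.
    by apply: ltW; apply: le_lt_trans HU; apply: ltW.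
  exact: ltW.
have h : k0 * cos (MM + dlt) <= k0 * cos d by apply: ler_wpM2l.
by apply: lt_le_trans Hcos _; rewrite lerD2r.
Qed.

Lemma lin_cont (c : R) : continuous (fun y : R => c * y).
Proof. by move=> y; apply: C_mul; [exact: C_cst | exact: cvg_id]. Qed.

Lemma Et_le t : 0 <= t -> (t%:E < tau)%E -> Et t <= E0.
Proof.
move=> t0 tt; rewrite leNgt; apply/negP => Hgt.
pose A := [set x : R | (0 <= x <= t) /\ (forall v, 0 <= v <= x -> Et v <= E0)].
have A0 : A 0.
  split; first by rewrite lexx t0.
  move=> v /andP[v0 v1]; have -> : v = 0 by apply/le_anti; rewrite v0 v1.
  by rewrite lexx.
have Aub : ubound A t by move=> x [/andP[_ ->] _].
have hsA : has_sup A by split; [exists 0 | exists t].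
have An0 : A !=set0 by exists 0.
set s := sup A.
have s0 : 0 <= s by apply: sup_upper_bound.
have st : s <= t by apply: ge_sup.
have tau_of : forall v, v <= t -> (v%:E < tau)%E.
  by move=> v vt; apply: le_lt_trans tt; rewrite lee_fin.
have Hlt : forall v, 0 <= v -> v < s -> Et v <= E0.
  move=> v v0 vs; have eps0 : 0 < s - v by rewrite subr_gt0.
  have [e [_ He] ve] := sup_adherent eps0 hsA.
  apply: He; rewrite v0 /=; rewrite -/s in ve.
  have : v < e by move: ve; rewrite opprB addrCA subrr addr0.
  exact: ltW.
have Hs : Et s <= E0.
  move: (s0); rewrite le_eqVlt => /orP[/eqP <-|s_pos]; first by rewrite lexx.
  rewrite leNgt; apply/negP => Egt.
  have cE : Et v @[v --> s] --> Et s.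
    exact: (@Eg_cvg (fun _ _ x => `|x|) R (nbhs s) _ theta omega s
       (fun _ _ => @norm_continuous _ _)
       (fun i => cont_th i s s_pos (tau_of s st)) (fun i => cont_om i s s_pos (tau_of s st))).
  have cEl := cvg_at_left_filter cE.
  have N1 : \forall v \near s^'-, E0 < Et v.
    by apply: (cvgr_gt (Et s)) => //; apply: cEl.
  have N2 := nbhs_left_gt s_pos.
  have N3 := nbhs_left_lt s.
  have := @filter_ex R (s^'-) _ _ (@filterI R (s^'-) _ _ _ N1 (@filterI R (s^'-) _ _ _ N2 N3)).
  move=> [v [h1 [h2 h3]]].
  by move: (Hlt v (ltW h2) h3); rewrite leNgt h1.
have st' : s < t.
  rewrite lt_neqAle st andbT; apply/negP => /eqP st_eq.
  by move: Hgt; rewrite -st_eq ltNge Hs.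
have s_tau := tau_of s (ltW st').
have sb : forall i j, i != j ->
    mm - dlt <= `|theta j s - theta i s| /\ `|theta j s - theta i s| <= MM + dlt.
  by move=> i j ij; apply: sep_bound.
have dpos : 0 < mm - dlt by rewrite subr_gt0 m_gt_delta.
pose sig i j := Num.sg (theta j s - theta i s).
have hth : forall i, theta i v @[v --> s^'+] --> theta i s.
  move=> i; move: (s0); rewrite le_eqVlt => /orP[/eqP <-|sp]; first exact: Hc0th.
  exact: cvg_at_right_filter (cont_th i s sp s_tau).
have hom : forall i, omega i v @[v --> s^'+] --> omega i s.
  move=> i; move: (s0); rewrite le_eqVlt => /orP[/eqP <-|sp]; first exact: Hc0om.
  exact: cvg_at_right_filter (cont_om i s sp s_tau).
have N1 : \forall v \near s^'+, v < t := nbhs_right_lt st'.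
have N2 : \forall v \near s^'+, forall i j, Num.sg (theta j v - theta i v) = sig i j.
  apply: filter_forall => i; apply: filter_forall => j.
  have [ij|ij] := eqVneq i j.
    by subst j; apply: filterE => v; rewrite /sig !subrr.
  have hd : (theta j v - theta i v) @[v --> s^'+] --> theta j s - theta i s.
    exact: C_sub (hth j) (hth i).
  have d0 : 0 < `|theta j s - theta i s|.
    by have [h _] := sb i j ij; apply: lt_le_trans h.
  apply: filterS (cvgr_dist_lt _ _ hd _ d0) => v /= Hv.
  by rewrite /sig (@sg_close _ _ _ Hv).
have N3 : \forall v \near s^'+, forall i j, 0 < k0 * cos (theta j v - theta i v) + k1.
  apply: filter_forall => i; apply: filter_forall => j.
  have hd : (theta j v - theta i v) @[v --> s^'+] --> theta j s - theta i s.
    exact: C_sub (hth j) (hth i).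
  have hc : (k0 * cos (theta j v - theta i v) + k1) @[v --> s^'+]
              --> k0 * cos (theta j s - theta i s) + k1.
    apply: C_add; last exact: C_cst.
    apply: C_mul; first exact: C_cst.
    by apply: C_comp hd _; exact: continuous_cos.
  apply: (cvgr_gt (k0 * cos (theta j s - theta i s) + k1)) => //; apply: cos_pos.
  have [ij|ij] := eqVneq i j; last exact: (sb i j ij).2.
  by subst j; rewrite subrr normr0 U_ge0.
have [e e0 He] := near_right_ex (@filterI R (s^'+) _ _ _ N1 (@filterI R (s^'+) _ _ _ N2 N3)).
pose b := s + e / 2.
have sb_lt : s < b by rewrite /b ltrDl divr_gt0.
have be : b < s + e by rewrite /b ltrD2l ltr_pdivrMr // ltr_pMr // ltr1n.
have Pv : forall v, s < v -> v <= b -> v < t /\ (forall i j, Num.sg (theta j v - theta i v) = sig i j)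
            /\ (forall i j, 0 < k0 * cos (theta j v - theta i v) + k1).
  by move=> v sv vb; apply: He => //; apply: le_lt_trans vb be.
have [bt _] := Pv b sb_lt (lexx b).
have sgs : forall v, s <= v -> v <= b -> forall i j, Num.sg (theta j v - theta i v) = sig i j.
  move=> v; rewrite le_eqVlt => /orP[/eqP <- _ i j //| sv vb].
  exact: (Pv v sv vb).2.1.
have EsE : forall v, s <= v -> v <= b -> Es sig v = Et v.
  move=> v sv vb; rewrite /Es Et_Eg /Eg; congr (_ + _ * _).
  apply: eq_bigr => i _; apply: eq_bigr => j _.
  by rewrite normrEsg (sgs v sv vb i j).
have int_ok : forall x, s < x -> x < b -> 0 < x /\ (x%:E < tau)%E.
  move=> x sx xb; split; first exact: le_lt_trans s0 sx.
  by apply: tau_of; apply: ltW; apply: lt_trans xb bt.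
have Hg : forall i j, continuous (fun y : R => sig i j * y) by move=> i j; apply: lin_cont.
have mono : forall v, s <= v -> v <= b -> Es sig v <= Es sig s.
  move=> v sv vb; apply: (@ler0_derive1_nincr R (Es sig) s b) => //.
  - move=> x; rewrite in_itv /= => /andP[sx xb].
    have [x0 xt] := int_ok x sx xb.
    have [_ [P2 P3]] := Pv x sx (ltW xb).
    exact: (Es_deriv sig x x0 xt P2 (fun i j => ltW (P3 i j))).1.
  - move=> x; rewrite in_itv /= => /andP[sx xb].
    have [x0 xt] := int_ok x sx xb.
    have [_ [P2 P3]] := Pv x sx (ltW xb).
    exact: (Es_deriv sig x x0 xt P2 (fun i j => ltW (P3 i j))).2.
  - apply/continuous_within_itvP => //; split.
    + move=> x; rewrite in_itv /= => /andP[sx xb].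
      have [x0 xt] := int_ok x sx xb.
      exact: (@Eg_cvg _ R (nbhs x) _ theta omega x Hg
              (fun i => cont_th i x x0 xt) (fun i => cont_om i x x0 xt)).
    + exact: (@Eg_cvg _ R (s^'+) _ theta omega s Hg hth hom).
    + have b0 : 0 < b by apply: le_lt_trans s0 sb_lt.
      have bt' : (b%:E < tau)%E by apply: tau_of; apply: ltW.
      apply: cvg_at_left_filter.
      exact: (@Eg_cvg _ R (nbhs b) _ theta omega b Hg
              (fun i => cont_th i b b0 bt') (fun i => cont_om i b b0 bt')).
have Ab : A b.
  split; first by rewrite (le_trans s0 (ltW sb_lt)) ltW.
  move=> v /andP[v0 vb]; have [vs|sv] := ltP v s; first exact: Hlt.
  rewrite -(EsE v sv vb); apply: le_trans (mono v sv vb) _.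
  by rewrite EsE ?lexx ?(ltW sb_lt).
have := sup_upper_bound hsA Ab; rewrite -/s.
by rewrite leNgt sb_lt.
Qed.

Hypothesis Htau : (0 < tau)%E.

Lemma final :
  (forall i j t, i != j -> 0 <= t -> (t%:E < tau)%E -> theta i t != theta j t) /\
  (forall i j, i != j ->
     ~ ((fun t => theta i t - theta j t) @ to_left_of tau --> (0 : R))).
Proof.
have dpos : 0 < mm - dlt by rewrite subr_gt0 m_gt_delta.
have key : forall i j t, i != j -> 0 <= t -> (t%:E < tau)%E ->
    mm - dlt <= `|theta i t - theta j t|.
  move=> i j t ij t0 tt.
  have ji : j != i by rewrite eq_sym.
  by have [h _] := sep_bound t j i (Et_le t t0 tt) ji.
split.
  move=> i j t ij t0 tt; apply/eqP => E.
  have := key i j t ij t0 tt; rewrite E subrr normr0 => h.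
  by move: dpos; rewrite ltNge h.
move=> i j ij.
move: key Htau; case: tau => [r| |] //= key tau0 Hcv.
- have r0 : 0 < r by rewrite -lte_fin.
  have N1 : \forall t \near r^'-, `|0 - (theta i t - theta j t)| < mm - dlt.
    by apply: (cvgr_dist_lt _ _ Hcv).
  have N2 := nbhs_left_gt r0.
  have N3 := nbhs_left_lt r.
  have := @filter_ex R (r^'-) _ _ (@filterI R (r^'-) _ _ _ N1 (@filterI R (r^'-) _ _ _ N2 N3)).
  move=> [v [h1 [h2 h3]]].
  have hk := key i j v ij (ltW h2) (ltac:(by rewrite lte_fin)).
  by move: h1; rewrite sub0r normrN ltNge hk.
- have N1 : \forall t \near +oo, `|0 - (theta i t - theta j t)| < mm - dlt.
    by apply: (cvgr_dist_lt _ _ Hcv).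
  have N2 := @nbhs_pinfty_gt R 0 (num_real _).
  have := @filter_ex R (pinfty_nbhs R) _ _ (@filterI R (pinfty_nbhs R) _ _ _ N1 N2).
  move=> [v [h1 h2]].
  have hk := key i j v ij (ltW h2) (ltry _).
  by move: h1; rewrite sub0r normrN ltNge hk.
Qed.

End Main.


Theorem theorem3p1 (R : realType) (N : nat) (k0 k1 k2 : R)
    (thinf : 'I_N -> 'I_N -> R) (tau : \bar R)
    (theta omega : 'I_N -> R -> R) :
  (1 < N)%N ->
  0 <= k0 -> 0 <= k1 -> 0 < k2 ->
  (forall i, thinf i i = 0) -> (forall i j, thinf i j = thinf j i) ->
  (0 < tau)%E ->
  (* smooth solution on [0, tau) *)
  (forall i, theta i x @[x --> 0^'+] --> theta i 0) ->
  (forall i, omega i x @[x --> 0^'+] --> omega i 0) ->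
  (forall i t, 0 < t -> (t%:E < tau)%E ->
     is_derive t 1 (theta i) (omega i t) /\
     is_derive t 1 (omega i)
       (kuramoto_rhs k0 k1 k2 thinf (fun j => theta j t) (fun j => omega j t) i)) ->
  (* assumptions on initial data and parameters *)
  let Th0 := fun j => theta j 0 in
  let W0 := fun j => omega j 0 in
  let E0 := energy k2 thinf Th0 W0 in
  let U := Ubound k2 thinf E0 in
  inS U Th0 W0 ->
  E0 < k2 * (min_offdiag thinf) ^+ 2 / (2 * N%:R) ->
  0 < k0 * cos U + k1 ->
  (* conclusion: no collision on [0, tau) nor as t -> tau^- *)
  (forall i j t, i != j -> 0 <= t -> (t%:E < tau)%E -> theta i t != theta j t) /\
  (forall i j, i != j ->
     ~ ((fun t => theta i t - theta j t) @ to_left_of tau --> (0 : R))).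
Proof.
move=> HN Hk0 Hk1 Hk2 Hdiag Hsym Htau Hc0th Hc0om Hder Th0 W0 E0' U [_ HU] HE0 Hcos.
exact: (@final _ _ _ _ _ _ _ _ _ HN Hk0 Hk2 Hsym HE0 Hder Hc0th Hc0om HU Hcos Htau).
Qed.
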